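(* Let $(B,B^* )$ be a couple of sequence spaces (a Banach sequence space $B$ and its dual realized as a sequence space) such that the complex interpolation space $(B,B^* )_{1/2}=\ell_2$, and let $\Omega$ be the corresponding derivation. Then for each finite set $F\subseteq\mathbb N$ there is a nonzero $b_*\in[e_j]_{j\in F}$ such that $$\Omega(b_* )=-2\,b_*\cdot\log\kappa(F),\qquad\text{where } \kappa(F)=\sup\{\|b\|_{\ell_2}:\ \|b\|_B=1,\ \operatorname{supp}b\subseteq F\}.$$
   Context: Complex interpolation (Kalton–Montgomery-Smith): for a compatible couple $(B_0,B_1)$, $\mathcal F_\infty(B_0,B_1)$ is the Calderón space of bounded continuous functions $f$ on the strip $\{0\le\operatorname{Re}z\le1\}$, analytic in the interior, with values in $B_0+B_1$, $f(it)\in B_0$, $f(1+it)\in B_1$, normed by $\max\{\sup_t\|f(it)\|_{B_0},\sup_t\|f(1+it)\|_{B_1}\}$. $(B_0,B_1)_\theta=\{f(\theta)\}$ with the quotient norm; $\delta_\theta f=f(\theta)$. The derivation is $\Omega=\delta'_\theta S$, i.e. $\Omega(b)=(S(b))'(\theta)$, where $S$ is a bounded selector ($\delta_\theta S(b)=b$, $\|S(b)\|\le C\|b\|$). $[e_j]_{j\in F}$ is the span of the unit vectors indexed by $F$. *)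

(* Defs.v *)
From HB Require Import structures.
From mathcomp Require Import all_boot all_order all_algebra.
From mathcomp Require Import all_classical all_reals.
From mathcomp Require Import ereal sequences exp.
From mathcomp Require Import complex.

Set Implicit Arguments.
Unset Strict Implicit.
Unset Printing Implicit Defensive.

Import Order.TTheory GRing.Theory Num.Theory.
Local Open Scope ring_scope.
Local Open Scope classical_set_scope.

Section Interp.
Variable R : realType.

Definition cplx := R[i].
Definition cseq := nat -> cplx.

Definition cmod (z : cplx) : R := ComplexField.Normc.normc z.
Definition rC (r : R) : cplx := Complex r 0.

Definition sadd (x y : cseq) : cseq := fun j => x j + y j.
Definition ssub (x y : cseq) : cseq := fun j => x j - y j.
Definition sscale (a : cplx) (x : cseq) : cseq := fun j => a * x j.
Definition szero : cseq := fun _ => 0.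
Definition unit_vec (k : nat) : cseq := fun j => if j == k then 1 else 0.

Definition supported (F : set nat) (b : cseq) : Prop :=
  forall j, ~ F j -> b j = 0.

(* A Banach sequence space is given by its (extended) norm N : cseq -> \bar R,
   the space being { x | N x < +oo }. *)
Definition bss_definite (N : cseq -> \bar R) : Prop :=
  forall x, N x = 0%E <-> x = szero.
Definition bss_homogeneous (N : cseq -> \bar R) : Prop :=
  forall a x, N (sscale a x) = ((cmod a)%:E * N x)%E.
Definition bss_triangle (N : cseq -> \bar R) : Prop :=
  forall x y, (N (sadd x y) <= N x + N y)%E.
Definition bss_ideal (N : cseq -> \bar R) : Prop :=
  forall x y : cseq, (forall j, cmod (x j) <= cmod (y j)) -> (N x <= N y)%E.
Definition bss_units (N : cseq -> \bar R) : Prop :=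
  forall k, (N (unit_vec k) < +oo)%E.
Definition bss_complete (N : cseq -> \bar R) : Prop :=
  forall u : nat -> cseq, (forall n, (N (u n) < +oo)%E) ->
    (forall e : R, 0 < e -> exists M : nat, forall m n, (M <= m)%N -> (M <= n)%N ->
        (N (ssub (u m) (u n)) <= e%:E)%E) ->
    exists x, (N x < +oo)%E /\
      forall e : R, 0 < e -> exists M : nat, forall n, (M <= n)%N ->
        (N (ssub (u n) x) <= e%:E)%E.

Definition banach_seq_space (N : cseq -> \bar R) : Prop :=
  bss_definite N /\ bss_homogeneous N /\ bss_triangle N /\ bss_ideal N /\
  bss_units N /\ bss_complete N.

(* the dual B^* realized as a sequence space (Koethe dual):
   ||y||_{B^*} = sup { sum_j |x_j y_j| : ||x||_B <= 1 } *)
Definition kdual (N : cseq -> \bar R) (y : cseq) : \bar R :=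
  ereal_sup [set (\sum_(0 <= j <oo) ((cmod (x j) * cmod (y j))%R%:E))%E
            | x in [set x | (N x <= 1)%E]].

Definition l2norm (x : cseq) : \bar R :=
  let s := (\sum_(0 <= j <oo) ((cmod (x j) ^+ 2)%R%:E))%E in
  if s == +oo%E then +oo%E else (Num.sqrt (fine s))%:E.

Section Couple.
Variables (N0 N1 : cseq -> \bar R).

Definition sumnorm (x : cseq) : \bar R :=
  ereal_inf [set z | exists x0 x1, x = sadd x0 x1 /\ z = (N0 x0 + N1 x1)%E].

Definition in_strip (z : cplx) : Prop := 0 <= Re z <= 1.
Definition in_open_strip (z : cplx) : Prop := 0 < Re z < 1.

Definition dquot (f : cplx -> cseq) (z0 z : cplx) (g : cseq) : cseq :=
  fun j => (f z j - f z0 j) / (z - z0) - g j.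

Definition has_cderiv (f : cplx -> cseq) (z0 : cplx) (g : cseq) : Prop :=
  forall e : R, 0 < e -> exists d : R, 0 < d /\
    forall z, 0 < cmod (z - z0) < d ->
      (sumnorm (dquot f z0 z g) <= e%:E)%E.

Definition calderon_norm (f : cplx -> cseq) : \bar R :=
  Order.max (ereal_sup [set N0 (f (Complex 0 t)) | t in [set: R]])
            (ereal_sup [set N1 (f (Complex 1 t)) | t in [set: R]]).

Definition calderon (f : cplx -> cseq) : Prop :=
  [/\ (exists M : R, forall z, in_strip z -> (sumnorm (f z) <= M%:E)%E),
      (forall z, in_strip z -> forall e : R, 0 < e -> exists d : R, 0 < d /\
          forall w, in_strip w -> cmod (w - z) < d ->
            (sumnorm (ssub (f w) (f z)) <= e%:E)%E),
      (forall z, in_open_strip z ->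
          exists g, (sumnorm g < +oo)%E /\ has_cderiv f z g) &
      (calderon_norm f < +oo)%E].

(* quotient norm of (B0,B1)_theta (+oo outside the interpolation space) *)
Definition interp_norm (theta : R) (x : cseq) : \bar R :=
  ereal_inf [set calderon_norm f | f in [set f | calderon f /\ f (rC theta) = x]].

End Couple.

Definition kappa (N : cseq -> \bar R) (F : set nat) : R :=
  fine (ereal_sup [set l2norm b | b in [set b | N b = 1%E /\ supported F b]]).

End Interp.

(* Main.v *)
Require Import Defs.
From HB Require Import structures.
From mathcomp Require Import all_boot all_order all_algebra.
From mathcomp Require Import all_classical all_reals.
From mathcomp Require Import ereal topology normedtype sequences exp trigo derive.
From mathcomp Require Import complex.
From mathcomp Require Import matrix_normedtype.
From mathcomp Require Import ring lra.
Import Order.TTheory GRing.Theory Num.Theory.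
Import numFieldNormedType.Exports.
Local Open Scope ring_scope.
Local Open Scope classical_set_scope.

Lemma deriv_eps (R : realType) (f : R -> R) (x l : R) : is_derive x (1:R) f l ->
  forall e : R, 0 < e -> exists2 d : R, 0 < d & forall h, `|h| < d ->
   `|f (x + h) - f x - l * h| <= e * `|h|.
Proof.
move=> [df dfl] e e0.
have HL : (fun h : R => h^-1 *: ((f \o shift x) (h *: (1:R)) - f x)) @ 0^' --> l.
  by rewrite -dfl; exact: df.
move/cvgrPdist_le : HL => /(_ e e0). rewrite /prop_near1 /dnbhs /within /= => /nbhs_ballP[d /= d0 Hd].
exists d => // h hd.
have [->|h0] := eqVneq h 0; first by rewrite !(addr0, mulr0, subrr, normr0, subr0).
have := Hd h; rewrite /ball /= sub0r normrN => /(_ hd h0).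
rewrite -[h%:A]/(h * 1) mulr1 (addrC h x) -[_ *: _]/(_ * _) => H.
have -> : f (x + h) - f x - l * h = - h * (l - h^-1 * (f (x + h) - f x)).
  by field.
by rewrite normrM normrN mulrC ler_wpM2r.
Qed.
Arguments deriv_eps {R f x l}.

Lemma real_lin (R : realType) (e : R) : 0 < e -> exists2 d : R, 0 < d &
  forall u v : R, `|u| < d -> `|v| < d ->
  `|expR u * cos v - 1 - u| + `|expR u * sin v - v| <= e * (`|u| + `|v|).
Proof.
move=> e0.
have [ep [ep0 ep1 ep8]] : exists ep : R, [/\ 0 < ep, ep <= 1 & 8 * ep <= e].
  exists (Num.min (e / 8) 1); split.
  - by rewrite lt_min ltr01 andbT divr_gt0.
  - by rewrite ge_min lexx orbT.
  - by rewrite -ler_pdivlMl // ?ltr0n // ge_min mulrC lexx.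
have [d1 d10 H1] := deriv_eps (is_derive_expR (0:R)) _ ep0.
have [d2 d20 H2] := deriv_eps (is_derive_cos (0:R)) _ ep0.
have [d3 d30 H3] := deriv_eps (is_derive_sin (0:R)) _ ep0.
exists (Num.min (Num.min d1 d2) (Num.min d3 (Num.min ep (2^-1)))).
  by rewrite !lt_min d10 d20 d30 ep0 invr_gt0 ltr0n.
move=> u v; rewrite !lt_min => /andP[/andP[u1 _] /andP[_ /andP[/ltW uep /ltW u2]]].
move=> /andP[/andP[_ v2] /andP[v3 _]].
have hA := H1 u u1; have hC := H2 v v2; have hS := H3 v v3.
rewrite ?(add0r, expR0, sin0, cos0, mul1r, oppr0, mul0r, subr0, addr0) in hA hC hS.
have A0 : 0 < expR u by exact: expR_gt0.
set A := expR u in hA A0 *; set C := cos v in hC *; set S := sin v in hS *.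
clearbody A C S.
have nu := normr_ge0 u; have nv := normr_ge0 v.
have hA1 : `|A - 1| <= 2 * `|u|.
  have -> : A - 1 = (A - 1 - u) + u by ring.
  apply: (le_trans (ler_normD _ _)).
  have : ep * `|u| <= `|u| by rewrite ler_piMl.
  lra.
have hA2 : `|A| <= 2.
  have -> : A = (A - 1) + 1 by ring.
  apply: (le_trans (ler_normD _ _)); rewrite normr1.
  have : `|u| <= 2^-1 by [].
  lra.
have hS2 : `|S| <= 2 * `|v|.
  have -> : S = (S - v) + v by ring.
  apply: (le_trans (ler_normD _ _)).
  have : ep * `|v| <= `|v| by rewrite ler_piMl.
  lra.
have T1 : `|A * C - 1 - u| <= ep * `|u| + 2 * (ep * `|v|).
  have -> : A * C - 1 - u = (A - 1 - u) + A * (C - 1) by ring.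
  apply: (le_trans (ler_normD _ _)); apply: lerD => //.
  by rewrite normrM; apply: ler_pM.
have T2 : `|A * S - v| <= (2 * ep) * (2 * `|v|) + ep * `|v|.
  have -> : A * S - v = (A - 1) * S + (S - v) by ring.
  apply: (le_trans (ler_normD _ _)); apply: lerD => //.
  rewrite normrM; apply: ler_pM => //.
  apply: (le_trans hA1); lra.
have : 8 * ep * (`|u| + `|v|) <= e * (`|u| + `|v|).
  by apply: ler_wpM2r => //; lra.
have : 0 <= ep * `|u| by rewrite mulr_ge0 // ltW.
have : 0 <= ep * `|v| by rewrite mulr_ge0 // ltW.
lra.
Qed.

Section Scalar.
Variable R : realType.
Implicit Types (a x y : R) (w h : cplx R).

Lemma mulC (a b c d : R) : (Complex a b) * (Complex c d) = Complex (a * c - b * d) (a * d + b * c) :> cplx R.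
Proof. by []. Qed.
Lemma addC (a b c d : R) : (Complex a b) + (Complex c d) = Complex (a + c) (b + d) :> cplx R.
Proof. by []. Qed.
Lemma oppC (a b : R) : - (Complex a b) = Complex (- a) (- b) :> cplx R.
Proof. by []. Qed.
Lemma oneC : 1 = Complex 1 0 :> cplx R. Proof. by []. Qed.
Lemma zeroC : 0 = Complex 0 0 :> cplx R. Proof. by []. Qed.
Lemma cmodE (a b : R) : cmod (Complex a b) = Num.sqrt (a ^+ 2 + b ^+ 2).
Proof. by []. Qed.

Lemma cmod_le_sum x y : cmod (Complex x y) <= `|x| + `|y|.
Proof.
rewrite cmodE -(@ger0_norm _ (`|x| + `|y|)) ?addr_ge0 // -sqrtr_sqr.
rewrite ler_sqrt ?sqr_ge0 // sqrrD !real_normK ?num_real // mulr2n.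
have := mulr_ge0 (normr_ge0 x) (normr_ge0 y); lra.
Qed.

Lemma Re_le_cmod w : `|complex.Re w| <= cmod w.
Proof.
case: w => x y; rewrite cmodE /= -sqrtr_sqr ler_sqrt ?addr_ge0 ?sqr_ge0 //.
by rewrite lerDl sqr_ge0.
Qed.

Lemma Im_le_cmod w : `|complex.Im w| <= cmod w.
Proof.
case: w => x y; rewrite cmodE /= -sqrtr_sqr ler_sqrt ?addr_ge0 ?sqr_ge0 //.
by rewrite lerDr sqr_ge0.
Qed.

Lemma cmod_ge0 w : 0 <= cmod w.
Proof. by case: w => x y; rewrite cmodE sqrtr_ge0. Qed.

Lemma cmodM w h : cmod (w * h) = cmod w * cmod h.
Proof. exact: ComplexField.Normc.normcM. Qed.

Lemma cmodV w : cmod (w^-1) = (cmod w)^-1.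
Proof. exact: ComplexField.Normc.normcV. Qed.

Lemma cmodD w h : cmod (w + h) <= cmod w + cmod h.
Proof. exact: le_normcD. Qed.

Lemma cmodN w : cmod (- w) = cmod w.
Proof. exact: normcN. Qed.

Lemma cmod_eq0 w : cmod w = 0 -> w = 0.
Proof. exact: ComplexField.Normc.eq0_normc. Qed.

Lemma cmod0 : cmod (0 : cplx R) = 0.
Proof. exact: ComplexField.Normc.normc0. Qed.

Lemma cmod1 : cmod (1 : cplx R) = 1.
Proof. exact: ComplexField.Normc.normc1. Qed.

Lemma cmod_rC x : cmod (rC x) = `|x|.
Proof. by rewrite /rC cmodE expr0n /= addr0 sqrtr_sqr. Qed.

Definition Ef a w : cplx R :=
  Complex (expR (-(2*a) * complex.Re w) * cos (-(2*a) * complex.Im w))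
          (expR (-(2*a) * complex.Re w) * sin (-(2*a) * complex.Im w)).

Lemma Ef_add a w h : Ef a (w + h) = Ef a w * Ef a h.
Proof.
case: w => x1 y1; case: h => x2 y2.
rewrite /Ef addC mulC /= !mulrDr expRD cosD sinD.
congr Complex; ring.
Qed.

Lemma cmod_Ef a w : cmod (Ef a w) = expR (-(2*a) * complex.Re w).
Proof.
rewrite /Ef cmodE !exprMn -mulrDr cos2Dsin2 mulr1 sqrtr_sqr.
by rewrite gtr0_norm // expR_gt0.
Qed.

Lemma Ef0 a : Ef a 0 = 1.
Proof.
rewrite /Ef (_ : complex.Re (0 : cplx R) = 0) // (_ : complex.Im (0 : cplx R) = 0) //.
by rewrite !mulr0 expR0 cos0 sin0 !mul1r.
Qed.

Lemma Ef_lin a (e : R) : 0 < e -> exists2 d : R, 0 < d & forall h,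
  cmod h < d -> cmod (Ef a h - 1 + rC (2 * a) * h) <= e * cmod h.
Proof.
move=> e0.
have k0 : 0 < 4 * `|a| + 1 by rewrite ltr_pwDr // mulr_ge0.
have [d0 d00 Hd] := @real_lin R _ (divr_gt0 e0 k0).
have k1 : 0 < 2 * `|a| + 1 by rewrite ltr_pwDr // mulr_ge0.
exists (d0 / (2 * `|a| + 1)); first by rewrite divr_gt0.
case=> x y hd.
have hx := Re_le_cmod (Complex x y); have hy := Im_le_cmod (Complex x y).
rewrite /= in hx hy.
set c := cmod (Complex x y) in hd hx hy *.
have c0 : 0 <= c by exact: cmod_ge0.
have hd' : (2 * `|a| + 1) * c < d0 by rewrite mulrC -ltr_pdivlMr.
have hu : `|-(2*a) * x| <= 2 * `|a| * c.
  by rewrite normrM normrN normrM (@ger0_norm _ 2) // ler_wpM2l // mulr_ge0.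
have hv : `|-(2*a) * y| <= 2 * `|a| * c.
  by rewrite normrM normrN normrM (@ger0_norm _ 2) // ler_wpM2l // mulr_ge0.
have ac : 0 <= `|a| * c by rewrite mulr_ge0.
have := Hd (-(2*a) * x) (-(2*a) * y).
have -> : Ef a (Complex x y) - 1 + rC (2 * a) * Complex x y =
   Complex (expR (-(2*a) * x) * cos (-(2*a) * y) - 1 - (-(2*a) * x))
           (expR (-(2*a) * x) * sin (-(2*a) * y) - (-(2*a) * y)).
  by rewrite /Ef /rC mulC oneC oppC !addC /=; congr Complex; ring.
move=> H; apply: (le_trans (cmod_le_sum _ _)); apply: (le_trans (H _ _)).
- by apply: (le_lt_trans hu); lra.
- by apply: (le_lt_trans hv); lra.
set ep := e / (4 * `|a| + 1).
have ep0 : 0 <= ep by rewrite divr_ge0 // ltW.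
have H4 : ep * (4 * `|a|) <= e.
  rewrite -[leRHS](divfK (lt0r_neq0 k0)) -/ep.
  by rewrite ler_wpM2l // lerDl.
have : ep * (4 * `|a| * c) <= e * c by rewrite mulrA ler_wpM2r.
have : ep * (`|-(2*a) * x| + `|-(2*a) * y|) <= ep * (4 * `|a| * c).
  by apply: ler_wpM2l => //; lra.
lra.
Qed.

End Scalar.

Set Implicit Arguments.
Unset Strict Implicit.
Unset Printing Implicit Defensive.

Section SeqSp.
Variable R : realType.
Variable N : cseq R -> \bar R.
Hypothesis hB : banach_seq_space N.

Lemma N_def x : N x = 0%E <-> x = szero R.
Proof. by case: hB => h _; exact: h. Qed.
Lemma N_hom a x : N (sscale a x) = ((cmod a)%:E * N x)%E.
Proof. by case: hB => _ [h _]; exact: h. Qed.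
Lemma N_tri x y : (N (sadd x y) <= N x + N y)%E.
Proof. by case: hB => _ [_ [h _]]; exact: h. Qed.
Lemma N_ideal x y : (forall j, cmod (x j) <= cmod (y j)) -> (N x <= N y)%E.
Proof. by case: hB => _ [_ [_ [h _]]]; exact: h. Qed.
Lemma N_unit k : (N (@unit_vec R k) < +oo)%E.
Proof. by case: hB => _ [_ [_ [_ [h _]]]]; exact: h. Qed.

Lemma N0 : N (szero R) = 0%E.
Proof. exact/N_def. Qed.

Lemma N_ge0 x : (0 <= N x)%E.
Proof.
rewrite -N0; apply: N_ideal => j; rewrite /szero cmod0; exact: cmod_ge0.
Qed.

Definition ne j := fine (N (@unit_vec R j)).

Lemma N_unitE j : N (@unit_vec R j) = (ne j)%:E.
Proof. by rewrite /ne fineK // ge0_fin_numE ?N_ge0 ?N_unit. Qed.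

Lemma ne_gt0 j : 0 < ne j.
Proof.
have h0 : 0 <= ne j by rewrite /ne fine_ge0 // N_ge0.
rewrite lt_neqAle h0 andbT; apply/eqP => e0.
have : N (@unit_vec R j) = 0%E by rewrite N_unitE -e0.
move/N_def/(congr1 (fun f => f j)); rewrite /unit_vec /szero eqxx.
by move/eqP; rewrite oner_eq0.
Qed.

Lemma N_coord x j : ((cmod (x j) * ne j)%:E <= N x)%E.
Proof.
rewrite EFinM -N_unitE -N_hom; apply: N_ideal => i.
rewrite /sscale /unit_vec; case: eqP => [->|_]; rewrite ?mulr1 ?mulr0 ?cmod0 //.
exact: cmod_ge0.
Qed.

Lemma N_fin n x : (forall j, (n <= j)%N -> x j = 0) ->
  (N x <= (\sum_(j < n) cmod (x j) * ne j)%:E)%E.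
Proof.
elim: n x => [|n IH] x hx.
  have -> : x = szero R by apply: funext => j; rewrite hx.
  by rewrite N0 big_ord0.
set x' := fun j => if j == n then 0 else x j.
rewrite {1}(_ : x = sadd x' (sscale (x n) (@unit_vec R n))); last first.
  apply: funext => j; rewrite /sadd /sscale /unit_vec /x'.
  by case: eqP => [->|_]; rewrite ?mulr1 ?mulr0 ?add0r ?addr0.
apply: le_trans (N_tri _ _) _; rewrite big_ord_recr /= EFinD; apply: leeD.
  apply: le_trans (IH x' _) _.
    move=> j nj; rewrite /x'; case: eqP => // jn; apply: hx.
    by rewrite ltn_neqAle nj andbT; apply/eqP => /esym.
  rewrite lee_fin le_eqVlt; apply/orP; left; apply/eqP; apply: eq_bigr => j _.
  by rewrite /x' (ltn_eqF (ltn_ord j)).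
by rewrite N_hom N_unitE -EFinM.
Qed.

Lemma series_fin (u : nat -> \bar R) n : (forall j, 0 <= u j)%E ->
  (forall j, (n <= j)%N -> u j = 0%E) ->
  (\sum_(0 <= j <oo) u j = \sum_(j < n) u j)%E.
Proof.
move=> u0 hu; rewrite (nneseries_split 0 n) // add0n eseries0 ?adde0 ?big_mkord //.
by move=> i ni _; exact: hu.
Qed.

Lemma l2norm_fin n (x : cseq R) : (forall j, (n <= j)%N -> x j = 0) ->
  l2norm x = (Num.sqrt (\sum_(j < n) cmod (x j) ^+ 2))%:E.
Proof.
move=> hx; rewrite /l2norm (@series_fin _ n).
- rewrite sumEFin; case: eqP => // //.
- by move=> j; rewrite lee_fin sqr_ge0.
- by move=> j nj; rewrite hx // cmod0 expr0n.
Qed.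

Lemma kdual0 : (kdual N (szero R) <= 0)%E.
Proof.
rewrite /kdual; apply: ge_ereal_sup => _ [x _ <-].
by rewrite eseries0 // => i _ _; rewrite /szero cmod0 mulr0.
Qed.

Lemma sumnorm_le x : (sumnorm N (kdual N) x <= N x)%E.
Proof.
apply: ge_ereal_inf; exists (N x + kdual N (szero R))%E.
  exists x, (szero R); split => //.
  by apply: funext => j; rewrite /sadd /szero addr0.
by rewrite -[leRHS]adde0; apply: leeD => //; exact: kdual0.
Qed.

End SeqSp.

Lemma contD' (T : topologicalType) (R : realType) (f g : T -> R) :
  continuous f -> continuous g -> continuous (fun x => f x + g x).
Proof. move=> cf cg x. apply: cvgD. exact: cf. exact: cg. Qed.

Lemma contM' (T : topologicalType) (R : realType) (f g : T -> R) :
  continuous f -> continuous g -> continuous (fun x => f x * g x).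
Proof. move=> cf cg x. apply: cvgM. exact: cf. exact: cg. Qed.

Lemma cont_sum (T : topologicalType) (R : realType) k (t : nat -> T -> R) :
  (forall j, continuous (t j)) -> continuous (fun x => \sum_(j < k) t j x).
Proof.
elim: k => [|k IH] ht.
  rewrite (_ : (fun x => _) = fun=> 0); first exact: cst_continuous.
  by apply: funext => x; rewrite big_ord0.
rewrite (_ : (fun x => _) = fun x => \sum_(j < k) t j x + t k x).
  by apply: contD' => //; exact: IH.
by apply: funext => x; rewrite big_ord_recr.
Qed.

Section Fin.
Variable R : realType.
Variable N : cseq R -> \bar R.
Hypothesis hB : banach_seq_space N.
Variable F : set nat.
Variable n : nat.
Hypothesis hFn : forall j, F j -> (j < n)%N.

Local Notation m := (n + n).+1.

Definition phi (v : 'rV[R]_m) : cseq R := fun j =>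
  if j \in F then Complex (v ord0 (inord j)) (v ord0 (inord (n + j))) else 0.

Lemma phi_supp v : supported F (phi v).
Proof.
move=> j nFj; rewrite /phi; case: ifPn => // /set_mem Fj; by exfalso; apply: nFj.
Qed.

Lemma phi_out v j : (n <= j)%N -> phi v j = 0.
Proof.
rewrite /phi; case: ifPn => // /set_mem /hFn; rewrite ltnNge => /negP h /h.
by [].
Qed.

Definition psi (b : cseq R) : 'rV[R]_m := \row_(k < m)
  (if (k < n)%N then complex.Re (b k)
   else if (k < n + n)%N then complex.Im (b (k - n)%N) else 0).

Lemma phi_psi b : supported F b -> phi (psi b) = b.
Proof.
move=> hb; apply: funext => j; rewrite /phi; case: ifPn => [/set_mem Fj|nFj].
  have jn := hFn Fj.
  have jm : (j < m)%N by rewrite ltnS (leq_trans (ltnW jn)) // leq_addr.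
  have njm : (n + j < m)%N by rewrite ltnS leq_add2l ltnW.
  rewrite !mxE !inordK // jn ltnNge leq_addr /= ltn_add2l jn addKn.
  by case: (b j).
by rewrite hb // => Fj; apply: (negP nFj); exact: mem_set.
Qed.

Lemma phiB v w j : phi (v - w) j = phi v j - phi w j.
Proof. by rewrite /phi; case: ifP => _; rewrite ?subr0 // !mxE. Qed.

Lemma entry_le (v : 'rV[R]_m) k : `|v ord0 k| <= `|v|.
Proof.
rewrite -[leRHS]/(mx_norm v) mx_normrE; apply/bigmax_geP; right => /=.
by exists (ord0, k).
Qed.

Lemma cmod_phi v j : cmod (phi v j) <= 2 * `|v|.
Proof.
rewrite /phi; case: ifP => _; last by rewrite cmod0 mulr_ge0.
apply: le_trans (cmod_le_sum _ _ _) _.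
have := entry_le v (inord j); have := entry_le v (inord (n + j)); lra.
Qed.

Definition G v := fine (N (phi v)).

Lemma NphiE v : N (phi v) = (G v)%:E.
Proof.
rewrite /G fineK // ge0_fin_numE ?(N_ge0 hB) //.
apply: le_lt_trans (N_fin hB (phi_out v)) _; exact: ltry.
Qed.

Definition L := \sum_(j < n) 2 * ne N j.

Lemma L0 : 0 <= L.
Proof. by apply: sumr_ge0 => j _; rewrite mulr_ge0 // ltW // (ne_gt0 hB). Qed.

Lemma G_le v w : G v <= G w + L * `|v - w|.
Proof.
have h1 : (N (phi v) <= N (phi w) + N (phi (v - w)))%E.
  rewrite {1}(_ : phi v = sadd (phi w) (phi (v - w))); first exact: (N_tri hB).
  by apply: funext => j; rewrite /sadd phiB addrC subrK.
have h2 : (N (phi (v - w)) <= (L * `|v - w|)%:E)%E.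
  apply: le_trans (N_fin hB (phi_out (v - w))) _.
  rewrite lee_fin /L mulr_suml; apply: ler_sum => j _.
  rewrite mulrAC; apply: ler_wpM2r; first by rewrite ltW // (ne_gt0 hB).
  exact: cmod_phi.
have := le_trans h1 (leeD (lexx (N (phi w))) h2).
by rewrite !NphiE -EFinD lee_fin.
Qed.

Lemma G_lip v w : `|G v - G w| <= L * `|v - w|.
Proof.
have h1 := G_le v w; have h2 := G_le w v; rewrite distrC in h2.
rewrite ler_norml; apply/andP; split; lra.
Qed.

Lemma G_cont : continuous G.
Proof.
move=> v A /= /nbhs_ballP[e e0 hA].
have L1 : 0 < L + 1 by rewrite ltr_pwDr // L0.
apply/nbhs_ballP; exists (e / (L + 1)); first by apply: divr_gt0.
move=> w; rewrite -ball_normE /= => hw; apply: hA.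
rewrite -ball_normE /=.
apply: le_lt_trans (G_lip v w) _.
apply: le_lt_trans (ler_wpM2l L0 (ltW hw)) _.
rewrite mulrCA gtr_pMr // ltr_pdivrMr // mul1r ltrDl //.
Qed.

Definition q v := \sum_(j < n) cmod (phi v j) ^+ 2.

Lemma q_cont : continuous q.
Proof.
have -> : q = (fun v => \sum_(j < n) (if nat_of_ord j \in F then
    (v ord0 (inord j)) ^+ 2 + (v ord0 (inord (n + j))) ^+ 2 else 0)).
  apply: funext => v; apply: eq_bigr => j _; rewrite /phi; case: ifP => _.
    by rewrite cmodE sqr_sqrtr // addr_ge0 // sqr_ge0.
  by rewrite cmod0 expr0n.
apply: (@cont_sum 'rV[R]_m R n (fun (j : nat) (v : 'rV[R]_m) => if j \in F then (v ord0 (inord j)) ^+ 2 + (v ord0 (inord (n + j))) ^+ 2 else 0)) => j; case: (j \in F); last exact: cst_continuous.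
have cc i : continuous (fun v : 'rV[R]_m => v ord0 i) := @coord_continuous R 1 m ord0 i.
by apply: contD'; rewrite /GRing.exp /=; apply: contM'.
Qed.

Definition M := \sum_(j < n) (ne N j)^-1.

Lemma M0 : 0 <= M.
Proof. by apply: sumr_ge0 => j _; rewrite invr_ge0 ltW // (ne_gt0 hB). Qed.

Lemma cmod_le_M b k : N b = 1%E -> (k < n)%N -> cmod (b k) <= M.
Proof.
move=> Nb kn.
have h := N_coord hB b k; rewrite Nb lee_fin in h.
have nk := ne_gt0 hB k.
apply: (@le_trans _ _ ((ne N k)^-1)).
  by rewrite -[(ne N k)^-1]mul1r ler_pdivlMr.
rewrite /M (bigD1 (Ordinal kn)) //= lerDl sumr_ge0 // => j _.
by rewrite invr_ge0 ltW // (ne_gt0 hB).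
Qed.

Lemma psi_norm b : N b = 1%E -> `|psi b| <= M.
Proof.
move=> Nb; rewrite -[leLHS]/(mx_norm (psi b)) mx_normrE; apply/bigmax_leP.
split; first exact: M0.
move=> [i k] _ /=; rewrite (ord1 i) mxE.
case: ifPn => kn; first exact: le_trans (Re_le_cmod _ _) (cmod_le_M Nb kn).
case: ifPn => kn2; last by rewrite normr0 M0.
apply: le_trans (Im_le_cmod _ _) (cmod_le_M Nb _).
have nk : (n <= k)%N by rewrite leqNgt.
by rewrite ltn_subLR.
Qed.

Definition K : set 'rV[R]_m := [set v | G v = 1 /\ `|v| <= M].

Lemma K_closed : closed K.
Proof.
have -> : K = G @^-1` [set 1] `&`
    (fun v : 'rV[R]_m => `|v|) @^-1` [set r | r <= M].
  by apply/seteqP; split => v [h1 h2]; split.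
apply: closedI; apply: closed_comp.
- by move=> v _; exact: G_cont.
- exact: closed_eq.
- by move=> v _; exact: norm_continuous.
- exact: closed_le.
Qed.

Lemma K_bounded : bounded_set K.
Proof.
rewrite /bounded_set /= /bounded_near.
near=> r => v [_ hv]; apply: le_trans hv _.
near: r; apply: nbhs_pinfty_ge; exact: num_real.
Unshelve. all: by end_near.
Qed.

Lemma psi_K b : supported F b -> N b = 1%E -> K (psi b).
Proof. by move=> sb Nb; split; [rewrite /G phi_psi // Nb | exact: psi_norm]. Qed.

Lemma K_ne : F !=set0 -> K !=set0.
Proof.
case=> j0 Fj0.
set b0 := sscale (rC (ne N j0)^-1) (@unit_vec R j0).
have sb0 : supported F b0.
  move=> j nFj; rewrite /b0 /sscale /unit_vec; case: eqP => [ej|_].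
    by subst j; exfalso; apply: nFj.
  by rewrite mulr0.
have nk := ne_gt0 hB j0.
have Nb0 : N b0 = 1%E.
  rewrite /b0 (N_hom hB) (N_unitE hB) cmod_rC -EFinM ger0_norm.
    by rewrite mulVf // gt_eqF.
  by rewrite invr_ge0 ltW.
by exists (psi b0); exact: psi_K.
Qed.

Lemma extremal : F !=set0 -> exists bs : cseq R,
  [/\ supported F bs, N bs = 1%E & forall b, supported F b -> N b = 1%E ->
    \sum_(j < n) cmod (b j) ^+ 2 <= \sum_(j < n) cmod (bs j) ^+ 2].
Proof.
move=> hFne.
have Kc : compact K := bounded_closed_compact K_bounded K_closed.
have qc : {within K, continuous q} by apply: continuous_subspaceT; exact: q_cont.
have [c cK cmax] := EVT_max_rV (K_ne hFne) Kc qc.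
move/set_mem: cK => [Gc _].
exists (phi c); split; first exact: phi_supp.
  by rewrite NphiE Gc.
move=> b sb Nb; have := cmax (psi b) (mem_set (psi_K sb Nb)).
by rewrite /q phi_psi.
Qed.

End Fin.

Lemma rCM (R : realType) (x y : R) : rC (x * y) = rC x * rC y.
Proof. by rewrite /rC mulC; congr Complex; ring. Qed.

Lemma Re_sub_rC (R : realType) (z : cplx R) (x : R) :
  complex.Re (z - rC x) = complex.Re z - x.
Proof. by case: z. Qed.

Lemma in_strip_Re (R : realType) (z : cplx R) :
  in_strip z -> 0 <= complex.Re z <= 1.
Proof.
rewrite /in_strip -complexRe.
have -> : (0 : cplx R) = ((0 : R)%:C)%C by [].
have -> : (1 : cplx R) = ((1 : R)%:C)%C by [].
by rewrite !lecR.
Qed.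

Lemma strip_bound (R : realType) (a x : R) : 0 <= x <= 1 ->
  -(2*a) * (x - 2^-1) <= `|a|.
Proof.
move=> /andP[x0 x1].
have h1 : 0 <= (`|a| - a) * (1 - x) by rewrite mulr_ge0 // subr_ge0 ?ler_norm.
have h2 : 0 <= (`|a| + a) * x.
  by rewrite mulr_ge0 // -lerBlDr sub0r -normrN ler_norm.
have -> : -(2*a) * (x - 2^-1) = a * (1 - 2 * x) + a * (2 * 2^-1 - 1) by ring.
rewrite divff // subrr mulr0 addr0.
lra.
Qed.

Theorem proposition3p3 (R : realType) (N : cseq R -> \bar R)
  (hB : banach_seq_space N)
  (hl2 : forall x : cseq R, interp_norm N (kdual N) (2^-1) x = l2norm x)
  (F : set nat) (hFfin : finite_set F) (hFne : F !=set0) :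
  exists bs : cseq R,
    [/\ supported F bs, bs <> szero R &
      (* Omega(bs) computed from an optimal (norm-attaining) extremal
         S(bs) = f in F_infty(B, dual B) with f(1/2) = bs *)
      (exists f : cplx R -> cseq R,
        [/\ calderon N (kdual N) f,
            f (rC (2^-1)) = bs,
            calderon_norm N (kdual N) f = interp_norm N (kdual N) (2^-1) bs &
            has_cderiv N (kdual N) f (rC (2^-1))
              (fun j => - (rC 2) * rC (ln (kappa N F)) * bs j)])].
Proof.
have [n hFn] : exists n, forall j, F j -> (j < n)%N.
  move/finite_seqP: hFfin => [s Fs].
  exists (\max_(x <- s) x).+1 => j; rewrite Fs /= => js.
  by rewrite ltnS; apply: (@leq_bigmax_seq _ s xpredT id j).
have [bs [sbs Nbs bmax]] := extremal hB hFn hFne.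
have bs_out : forall j, (n <= j)%N -> bs j = 0.
  by move=> j nj; apply: sbs => Fj; have := hFn _ Fj; rewrite ltnNge nj.
have bsnz : bs <> szero R.
  by move=> /(N_def hB); rewrite Nbs => /eqP; rewrite eqe oner_eq0.
set k2 := \sum_(j < n) cmod (bs j) ^+ 2.
have k2ge : 0 <= k2 by apply: sumr_ge0 => j _; exact: sqr_ge0.
have k20 : 0 < k2.
  rewrite lt_neqAle k2ge andbT eq_sym; apply/eqP => k0; apply: bsnz.
  apply: funext => j; case: (ltnP j n) => jn; last exact: bs_out.
  have := @psumr_eq0P _ _ xpredT (fun i : 'I_n => cmod (bs i) ^+ 2)
    (fun i _ => sqr_ge0 _) k0 (Ordinal jn) isT.
  by move=> /= /eqP; rewrite sqrf_eq0 => /eqP /cmod_eq0.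
set kap := Num.sqrt k2.
have kap0 : 0 < kap by rewrite sqrtr_gt0.
have kapsq : kap ^+ 2 = k2 by rewrite sqr_sqrtr.
have l2b : forall b : cseq R, supported F b ->
    l2norm b = (Num.sqrt (\sum_(j < n) cmod (b j) ^+ 2))%:E.
  move=> b sb; apply: l2norm_fin => j nj; apply: sb => Fj.
  by have := hFn _ Fj; rewrite ltnNge nj.
have kapE : kappa N F = kap.
  rewrite /kappa; suff -> : ereal_sup
     [set l2norm b | b in [set b : cseq R | N b = 1%E /\ supported F b]] = kap%:E by [].
  apply: le_anti; apply/andP; split.
    apply: ge_ereal_sup => _ [b [Nb sb] <-]; rewrite l2b // lee_fin.
    by rewrite ler_sqrt //; exact: bmax.
  by apply: ereal_sup_ubound; exists bs => //; rewrite l2b.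
set a := ln kap.
have ea : expR a = kap by rewrite /a lnK // posrE.
set c := fun z : cplx R => Ef R a (z - rC 2^-1).
set f := fun z : cplx R => sscale (c z) bs.
have Nsc : forall w : cplx R, N (sscale w bs) = (cmod w)%:E.
  by move=> w; rewrite (N_hom hB) Nbs mule1.
have cmod_c : forall z : cplx R,
    cmod (c z) = expR (-(2*a) * (complex.Re z - 2^-1)).
  by move=> z; rewrite /c cmod_Ef Re_sub_rC.
have c_add : forall z w : cplx R, c w = c z * Ef R a (w - z).
  by move=> z w; rewrite /c -Ef_add; congr Ef; ring.
have c_half : c (rC 2^-1) = 1 by rewrite /c subrr Ef0.
have snle : forall x : cseq R, (sumnorm N (kdual N) x <= N x)%E := sumnorm_le N.
have key : forall x : cseq R, (N x <= 1)%E ->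
    \sum_(j < n) cmod (x j) * cmod (bs j) <= k2.
  move=> x Nx.
  set xF : cseq R := fun j => if j \in F then x j else 0.
  have NxF : (N xF <= 1)%E.
    apply: le_trans Nx; apply: (N_ideal hB) => j; rewrite /xF.
    by case: ifP => _; [exact: lexx | rewrite cmod0; exact: cmod_ge0].
  have sxF : supported F xF.
    move=> j nFj; rewrite /xF; case: ifPn => // /set_mem Fj.
    by exfalso; apply: nFj.
  have E1 : \sum_(j < n) cmod (x j) * cmod (bs j) =
            \sum_(j < n) cmod (xF j) * cmod (bs j).
    apply: eq_bigr => j _; rewrite /xF; case: ifPn => // /negP nFj.
    by rewrite (sbs j) ?cmod0 ?mulr0 // => Fj; apply: nFj; exact: mem_set.
  have S2 : \sum_(j < n) cmod (xF j) ^+ 2 <= k2.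
    have NxFfin : N xF = (fine (N xF))%:E.
      rewrite fineK // ge0_fin_numE ?(N_ge0 hB) //.
      by apply: le_lt_trans NxF _; exact: ltry.
    set s := fine (N xF) in NxFfin.
    have s0 : 0 <= s by rewrite /s fine_ge0 // (N_ge0 hB).
    have s1 : s <= 1 by rewrite -lee_fin -NxFfin.
    have [s00|sp] := eqVneq s 0.
      have xF0 : xF = szero R by apply/(N_def hB); rewrite NxFfin s00.
      rewrite big1; first exact: k2ge.
      by move=> j _; rewrite xF0 /szero cmod0 expr0n.
    have s0' : 0 < s by rewrite lt_neqAle eq_sym sp s0.
    set y := sscale (rC s^-1) xF.
    have Ny : N y = 1%E.
      rewrite /y (N_hom hB) NxFfin cmod_rC -EFinM ger0_norm ?invr_ge0 //.
      by rewrite mulVf // gt_eqF.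
    have sy : supported F y by move=> j nFj; rewrite /y /sscale sxF // mulr0.
    have := bmax y sy Ny.
    rewrite /y /sscale.
    under eq_bigr => j _ do rewrite cmodM cmod_rC exprMn.
    rewrite -mulr_sumr ger0_norm ?invr_ge0 // => H.
    set T := \sum_(j < n) cmod (xF j) ^+ 2 in H *.
    have -> : T = s ^+ 2 * (s^-1 ^+ 2 * T).
      by rewrite mulrA -exprMn divff ?expr1n ?mul1r // gt_eqF.
    apply: le_trans (ler_wpM2l (sqr_ge0 s) H) _.
    have s2 : s ^+ 2 <= 1 by rewrite expr2 mulr_ile1.
    by rewrite ler_piMl.
  rewrite E1; apply: (@le_trans _ _
     (\sum_(j < n) (cmod (xF j) ^+ 2 + cmod (bs j) ^+ 2) / 2)).
    apply: ler_sum => j _.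
    have := sqr_ge0 (cmod (xF j) - cmod (bs j)).
    rewrite sqrrB mulr2n => hh; lra.
  rewrite -mulr_suml big_split /= -/k2; lra.
have kd : forall w : cplx R, (kdual N (sscale w bs) <= (cmod w * k2)%:E)%E.
  move=> w; apply: ge_ereal_sup => _ [x Nx <-].
  rewrite (series_fin (n:=n)).
  - rewrite sumEFin lee_fin /sscale.
    under eq_bigr => j _ do rewrite cmodM mulrCA.
    rewrite -mulr_sumr; apply: ler_wpM2l; first exact: cmod_ge0.
    exact: (key x Nx).
  - by move=> j; rewrite lee_fin mulr_ge0 // cmod_ge0.
  - by move=> j nj; rewrite /sscale bs_out // mulr0 cmod0 mulr0.
have Nf : forall z, N (f z) = (cmod (c z))%:E := fun z => Nsc (c z).
have ssub_f : forall z w, ssub (f w) (f z) = sscale (c w - c z) bs.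
  by move=> z w; apply: funext => j; rewrite /ssub /f /sscale mulrBl.
have Ef_small : exists2 d : R, 0 < d & forall h, cmod h < d ->
    cmod (Ef R a h - 1) <= (1 + 2 * `|a|) * cmod h.
  have [d d0 H] := Ef_lin R a 1 ltr01.
  exists d => // h hd.
  have -> : Ef R a h - 1 = (Ef R a h - 1 + rC (2 * a) * h) - rC (2 * a) * h.
    by ring.
  apply: le_trans (cmodD _ _ _) _.
  rewrite cmodN cmodM cmod_rC normrM normr_nat.
  have := H h hd; have := cmod_ge0 R h; have := normr_ge0 a.
  nra.
have deriv : forall z0 : cplx R,
    has_cderiv N (kdual N) f z0 (sscale (- rC 2 * rC a * c z0) bs).
  move=> z0 e e0.
  set K2 := cmod (c z0) + 1.
  have K20 : 0 < K2.
    have := cmod_ge0 R (c z0); rewrite /K2; lra.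
  have [d d0 Hd] := Ef_lin R a _ (divr_gt0 e0 K20).
  exists d; split => // z /andP[hz0 hzd].
  set h := z - z0 in hz0 hzd *.
  have h0 : h != 0.
    by apply/eqP => h0; move: hz0; rewrite h0 cmod0 ltxx.
  apply: le_trans (snle _) _.
  have -> : dquot f z0 z (sscale (- rC 2 * rC a * c z0) bs) =
      sscale (c z0 * ((Ef R a h - 1 + rC (2 * a) * h) / h)) bs.
    apply: funext => j; rewrite /dquot /f /sscale (c_add z0 z) -/h rCM.
    by field.
  rewrite Nsc lee_fin cmodM cmodM cmodV.
  have H := Hd h hzd.
  have H2 : cmod (Ef R a h - 1 + rC (2 * a) * h) * (cmod h)^-1 <= e / K2.
    by rewrite ler_pdivrMr.
  apply: le_trans (ler_wpM2l (cmod_ge0 _ _) H2) _.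
  rewrite mulrA ler_pdivrMr // mulrC; apply: ler_wpM2l; first exact: ltW.
  by rewrite /K2 lerDl.
have c0t : forall t : R, cmod (c (Complex 0 t)) = kap.
  move=> t; rewrite cmod_c /= sub0r mulrNN mulrAC divff // mul1r ea //.
have c1t : forall t : R, cmod (c (Complex 1 t)) = kap^-1.
  move=> t; rewrite cmod_c /=.
  have -> : -(2 * a) * (1 - 2^-1) = - a by field.
  by rewrite expRN ea.
have calnorm : calderon_norm N (kdual N) f = kap%:E.
  rewrite /calderon_norm.
  have -> : ereal_sup [set N (f (Complex 0 t)) | t in [set: R]] = kap%:E.
    apply: le_anti; apply/andP; split.
      by apply: ge_ereal_sup => _ [t _ <-]; rewrite Nf c0t.
    by apply: ereal_sup_ubound; exists 0 => //; rewrite Nf c0t.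
  rewrite max_l //; apply: ge_ereal_sup => _ [t _ <-].
  apply: le_trans (kd _) _; rewrite c1t lee_fin -kapsq expr2 mulrA mulVf.
    by rewrite mul1r.
  by rewrite gt_eqF.
have cal : calderon N (kdual N) f.
  split.
  - exists (expR `|a|) => z /in_strip_Re hz.
    apply: le_trans (snle _) _; rewrite Nf lee_fin cmod_c ler_expR.
    exact: strip_bound.
  - move=> z _ e e0.
    have [d d0 Hd] := Ef_small.
    set K1 := (cmod (c z) + 1) * (1 + 2 * `|a|).
    have K10 : 0 < K1.
      have := cmod_ge0 R (c z); have := normr_ge0 a => *.
      rewrite /K1 mulr_gt0 //; lra.
    exists (Num.min d (e / K1)); split; first by rewrite lt_min d0 divr_gt0.
    move=> w _; rewrite lt_min => /andP[hd he].
    apply: le_trans (snle _) _; rewrite ssub_f Nsc lee_fin.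
    rewrite (c_add z w) -{2}(mulr1 (c z)) -mulrBr cmodM.
    have h1 := Hd _ hd.
    apply: le_trans (ler_wpM2l (cmod_ge0 _ _) h1) _.
    rewrite mulrA; apply: (@le_trans _ _ (K1 * cmod (w - z))).
      apply: ler_wpM2r; first exact: cmod_ge0.
      rewrite /K1; apply: ler_wpM2r; last by rewrite lerDl.
      have := normr_ge0 a; lra.
    by rewrite mulrC -ler_pdivlMr // ltW.
  - move=> z _; exists (sscale (- rC 2 * rC a * c z) bs); split.
      by apply: le_lt_trans (snle _) _; rewrite Nsc; exact: ltry.
    exact: deriv.
  - by rewrite calnorm; exact: ltry.
have intp : interp_norm N (kdual N) 2^-1 bs = kap%:E by rewrite hl2 l2b.
exists bs; split => //.
exists f; split => //.
- by apply: funext => j; rewrite /f /sscale c_half mul1r.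
- by rewrite calnorm intp.
- rewrite kapE -/a.
  have -> : (fun j => - rC 2 * rC a * bs j) =
      sscale (- rC 2 * rC a * c (rC 2^-1)) bs.
    by apply: funext => j; rewrite /sscale c_half mulr1.
  exact: deriv.
Qed.
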